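(* Let $k\ge1$, $G=(V,E)$ an inductively $k$-independent graph with $k$-independence ordering $v_1,\dots,v_n$, $f:2^V\to\mathbb{R}_{\ge0}$ submodular with $f(\emptyset)=0$, $\beta>0$ and $p\in(0,1)$. Run algorithm PD-RAND (described in the context). For each $i$, let $S_i$ be the (random) stack just before $v_i$ is processed, $B_i=N(v_i)\cap\{v_1,\dots,v_{i-1}\}$, $B_i'=B_i\cup\{v_i\}$, and $w(X)=\sum_{v_j\in X}w_j$. Then \[ \mathbb{E}\big[f_{S_i}(v_i)\,\mathbf{1}_{v_i\notin S_{\mathrm{end}}}\big]\le \max\Big\{\frac{1-p}{p},\,1+\beta\Big\}\,\mathbb{E}\big[w(B_i'\cap S_{\mathrm{end}})\big]. \]
   Context: $N(v)$ is the neighbourhood of $v$ (excluding $v$); $G$ is inductively $k$-independent with $k$-independence ordering $v_1,\dots,v_n$ if for every $i$, $G[N(v_i)\cap\{v_i,\dots,v_n\}]$ has no independent set of size more than $k$. For $S\subseteq V$, $f_S(v)=f(S\cup\{v\})-f(S)$. Algorithm PD-RAND (parameters $\beta>0$, $p\in(0,1)$). Phase 1: start with $S=\emptyset$ (a stack) and $w_1=\dots=w_n=0$. For $i=1,\dots,n$: let $C_i=N(v_i)\cap S$ for the current $S$; if $f_S(v_i)>(1+\beta)\sum_{v_j\in C_i}w_j$, then with probability $p$ (independently of all else) set $w_i=f_S(v_i)-\sum_{v_j\in C_i}w_j$ (with $S$ the set before insertion) and push $v_i$ onto $S$; in all other cases leave $w_i=0$ and do not add $v_i$. Let $S_{\mathrm{end}}$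 be $S$ at the end of Phase 1. Phase 2: with $S_{\mathrm{out}}=\emptyset$, pop vertices of $S_{\mathrm{end}}$ in reverse insertion order, adding a popped $v$ to $S_{\mathrm{out}}$ whenever $S_{\mathrm{out}}\cup\{v\}$ is independent. Output $S_{\mathrm{out}}$. *)

(* Defs.v *)
From HB Require Import structures.
From mathcomp Require Import all_boot all_order all_algebra.
Set Implicit Arguments. Unset Strict Implicit. Unset Printing Implicit Defensive.
Import Order.TTheory GRing.Theory Num.Theory.
Local Open Scope ring_scope.

(* Vertices are 'I_n; the vertex v_{i+1} of the paper is the ordinal i, so
   the k-independence ordering v_1,...,v_n is the natural order of 'I_n. *)

Definition simple_graph (n : nat) (e : rel 'I_n) : Prop :=
  symmetric e /\ irreflexive e.

Definition nbhd (n : nat) (e : rel 'I_n) (v : 'I_n) : {set 'I_n} :=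
  [set u | e v u].

Definition independent (n : nat) (e : rel 'I_n) (I : {set 'I_n}) : Prop :=
  forall x y, x \in I -> y \in I -> x != y -> ~~ e x y.

Definition inductively_k_independent (n : nat) (e : rel 'I_n) (k : nat) : Prop :=
  forall i : 'I_n, forall I : {set 'I_n},
    I \subset nbhd e i :&: [set j : 'I_n | (i <= j)%N] ->
    independent e I -> (#|I| <= k)%N.

Definition submodular (R : realFieldType) (n : nat) (f : {set 'I_n} -> R) : Prop :=
  forall A B : {set 'I_n}, f (A :|: B) + f (A :&: B) <= f A + f B.

Definition marg (R : realFieldType) (n : nat) (f : {set 'I_n} -> R)
  (S : {set 'I_n}) (v : 'I_n) : R := f (v |: S) - f S.

Definition wsum (R : realFieldType) (n : nat) (w : {ffun 'I_n -> R})
  (X : {set 'I_n}) : R := \sum_(j in X) w j.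

(* Randomness of PD-RAND: independent Bernoulli(p) coins, one per vertex,
   pre-sampled; coin i is the coin flipped (if at all) when v_i is processed. *)
Definition coins (n : nat) := {ffun 'I_n -> bool}.

Definition coin_prob (R : realFieldType) (n : nat) (p : R) (c : coins n) : R :=
  \prod_(i : 'I_n) (if c i then p else 1 - p).

Definition expect (R : realFieldType) (n : nat) (p : R) (X : coins n -> R) : R :=
  \sum_(c : coins n) coin_prob p c * X c.

(* One step of Phase 1 of PD-RAND, processing vertex i with coin b.
   The state is (current stack contents as a set, weights w). *)
Definition pd_step (R : realFieldType) (n : nat) (e : rel 'I_n)
  (f : {set 'I_n} -> R) (beta : R) (b : bool)
  (st : {set 'I_n} * {ffun 'I_n -> R}) (i : 'I_n)
  : {set 'I_n} * {ffun 'I_n -> R} :=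
  let S := st.1 in let w := st.2 in
  let C := nbhd e i :&: S in
  if (marg f S i > (1 + beta) * wsum w C) && b then
    (i |: S, [ffun j => if j == i then marg f S i - wsum w C else w j])
  else st.

Fixpoint pd_phase1 (R : realFieldType) (n : nat) (e : rel 'I_n)
  (f : {set 'I_n} -> R) (beta : R) (c : coins n) (m : nat)
  : {set 'I_n} * {ffun 'I_n -> R} :=
  match m with
  | 0 => (set0, [ffun => 0])
  | m'.+1 =>
      let st := pd_phase1 e f beta c m' in
      match (insub m' : option 'I_n) with
      | Some i => pd_step e f beta (c i) st i
      | None => st
      end
  end.

Definition stack_before (R : realFieldType) (n : nat) (e : rel 'I_n)
  (f : {set 'I_n} -> R) (beta : R) (c : coins n) (i : 'I_n) : {set 'I_n} :=
  (pd_phase1 e f beta c i).1.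

Definition S_end (R : realFieldType) (n : nat) (e : rel 'I_n)
  (f : {set 'I_n} -> R) (beta : R) (c : coins n) : {set 'I_n} :=
  (pd_phase1 e f beta c n).1.

Definition w_end (R : realFieldType) (n : nat) (e : rel 'I_n)
  (f : {set 'I_n} -> R) (beta : R) (c : coins n) : {ffun 'I_n -> R} :=
  (pd_phase1 e f beta c n).2.

Definition Bprime (n : nat) (e : rel 'I_n) (i : 'I_n) : {set 'I_n} :=
  i |: (nbhd e i :&: [set j : 'I_n | (j < i)%N]).

(* Main.v *)
Require Import Defs.
From HB Require Import structures.
From mathcomp Require Import all_boot all_order all_algebra.
From mathcomp Require Import ring lra.
Import Order.TTheory GRing.Theory Num.Theory.
Local Open Scope ring_scope.

Section Helpers.
Variables (R : realFieldType) (n : nat) (e : rel 'I_n) (f : {set 'I_n} -> R) (beta : R).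

Lemma phase1_agree (c c' : coins n) m :
  (forall j : 'I_n, (j < m)%N -> c j = c' j) ->
  pd_phase1 e f beta c m = pd_phase1 e f beta c' m.
Proof.
elim: m => [|m IH] H //=.
rewrite IH; last by move=> j Hj; apply: H; exact: ltnW.
case: insubP => [j _ Hj|_] //.
by rewrite H // Hj.
Qed.

Lemma phase1_sub (c : coins n) m :
  (pd_phase1 e f beta c m).1 \subset [set j : 'I_n | (j < m)%N].
Proof.
elim: m => [|m IH] /=; first by rewrite sub0set.
case: insubP => [j _ Hj|_].
  rewrite /pd_step; case: ifP => _ /=.
    apply/subsetP => x; rewrite !inE => /orP[/eqP->|]; first by rewrite Hj.
    by move/(subsetP IH); rewrite inE => /ltnW.
  apply/subsetP => x /(subsetP IH); rewrite !inE => /ltnW //.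
apply/subsetP => x /(subsetP IH); rewrite !inE => /ltnW //.
Qed.

Lemma phase1_wge0 (c : coins n) m j : 0 <= beta -> 0 <= (pd_phase1 e f beta c m).2 j.
Proof.
move=> hb; elim: m j => [|m IH] j /=; first by rewrite ffunE.
case: insubP => [i _ Hi|_]; last exact: IH.
rewrite /pd_step; case: ifP => [/andP[H _]|_] /=; last exact: IH.
rewrite ffunE; case: (j == i); last exact: IH.
set W := wsum _ _ in H *.
have W0 : 0 <= W by apply: sumr_ge0 => x _; exact: IH.
have : 0 <= beta * W by exact: mulr_ge0.
lra.
Qed.

Lemma phase1_stable (c : coins n) m1 m2 (j : 'I_n) : (m1 <= m2)%N -> (j < m1)%N ->
  (j \in (pd_phase1 e f beta c m2).1) = (j \in (pd_phase1 e f beta c m1).1) /\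
  (pd_phase1 e f beta c m2).2 j = (pd_phase1 e f beta c m1).2 j.
Proof.
move=> le jl; elim: m2 le => [|m2 IH] le.
  by move: le; rewrite leqn0 => /eqP->.
move: le; rewrite leq_eqVlt => /orP[/eqP->|lt]; first by [].
have [IH1 IH2] := IH lt.
rewrite /=; case: insubP => [i _ Hi|_]; last by [].
have ji : j != i.
  apply/eqP => E; move: jl lt; rewrite E Hi => a b.
  by have := leq_trans a b; rewrite ltnn.
rewrite /pd_step; case: ifP => _ /=; last by [].
by rewrite ffunE (negbTE ji) in_setU1 (negbTE ji).
Qed.

Lemma step_at (c : coins n) (i : 'I_n) :
  pd_phase1 e f beta c i.+1 = pd_step e f beta (c i) (pd_phase1 e f beta c i) i.
Proof.
rewrite /=; case: insubP => [j _ Hj|]; last by rewrite ltn_ord.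
by have -> : j = i by apply: val_inj.
Qed.

End Helpers.
Arguments phase1_agree {R n} e f beta.
Arguments phase1_sub {R n} e f beta.
Arguments phase1_wge0 {R n} e f beta.
Arguments phase1_stable {R n} e f beta.
Arguments step_at {R n} e f beta.

Theorem lemma8 (R : realFieldType) (n : nat) (e : rel 'I_n) (k : nat)
  (f : {set 'I_n} -> R) (beta p : R) (i : 'I_n) :
  (1 <= k)%N ->
  simple_graph e ->
  inductively_k_independent e k ->
  (forall A : {set 'I_n}, 0 <= f A) ->
  f set0 = 0 ->
  submodular f ->
  0 < beta -> 0 < p -> p < 1 ->
  expect p (fun c => marg f (stack_before e f beta c i) i *
                     (i \notin S_end e f beta c)%:R)
  <= Num.max ((1 - p) / p) (1 + beta) *
     expect p (fun c => wsum (w_end e f beta c) (Bprime e i :&: S_end e f beta c)).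
Proof.
move=> _ _ _ _ _ _ hb hp hp1.
set M := Num.max _ _.
set X := fun c => _ * _.
set Y := fun c => wsum _ _.
have M1 : (1 - p) / p <= M by rewrite le_max lexx.
have M2 : 1 + beta <= M by rewrite le_max lexx orbT.
have M0 : 0 <= M by apply: le_trans M2; lra.
pose flip (c : coins n) : coins n := [ffun j => if j == i then ~~ c j else c j].
have flipK : involutive flip.
  move=> c; apply/ffunP => j; rewrite !ffunE; case: (j == i) => //; exact: negbK.
have flip_inj : injective flip := inv_inj flipK.
have in_end : forall c, (i \in S_end e f beta c) = (i \in (pd_phase1 e f beta c i.+1).1).
  by move=> c; have [] := phase1_stable e f beta c i.+1 n i (ltn_ord i) (ltnSn i).
have Yeq : forall c, Y c = wsum (pd_phase1 e f beta c i.+1).2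
                         (Bprime e i :&: (pd_phase1 e f beta c i.+1).1).
  move=> c; rewrite /Y /wsum /w_end /S_end; apply: eq_big => j.
    rewrite !in_setI; case Hb: (j \in Bprime e i) => //.
    have jl : (j < i.+1)%N.
      move: Hb; rewrite /Bprime !inE => /orP[/eqP->//|/andP[_ ]]; exact: ltnW.
    by have [-> _] := phase1_stable e f beta c i.+1 n j (ltn_ord i) jl.
  rewrite in_setI => /andP[Hb _].
  have jl : (j < i.+1)%N.
    move: Hb; rewrite /Bprime !inE => /orP[/eqP->//|/andP[_ ]]; exact: ltnW.
  by have [_ ->] := phase1_stable e f beta c i.+1 n j (ltn_ord i) jl.
have probD : forall c, coin_prob p c = (if c i then p else 1 - p) *
     \prod_(j | j != i) (if c j then p else 1 - p).
  by move=> c; rewrite /coin_prob (bigD1 i).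
have probQ : forall c, \prod_(j | j != i) (if flip c j then p else 1 - p) =
                       \prod_(j | j != i) (if c j then p else 1 - p).
  by move=> c; apply: eq_bigr => j ji; rewrite ffunE (negbTE ji).
have key : forall c : coins n, c i = false ->
  coin_prob p c * X c + coin_prob p (flip c) * X (flip c) <=
  M * (coin_prob p c * Y c + coin_prob p (flip c) * Y (flip c)).
  move=> c ci.
  have fci : flip c i = true by rewrite ffunE eqxx ci.
  have same : pd_phase1 e f beta (flip c) i = pd_phase1 e f beta c i.
    apply: phase1_agree => j jl; rewrite ffunE.
    have -> : (j == i) = false by apply/negbTE/eqP => E; move: jl; rewrite E ltnn.
    by [].
  rewrite (probD c) (probD (flip c)) probQ ci fci.
  set Q := \prod_(j | _) _.
  have Q0 : 0 <= Q by apply: prodr_ge0 => j _; case: (c j); lra.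
  rewrite /X !Yeq /stack_before !in_end !step_at same ci fci.
  set st := pd_phase1 e f beta c i.
  have Ssub := phase1_sub e f beta c i; rewrite -/st in Ssub.
  have iS : i \notin st.1.
    by apply/negP => /(subsetP Ssub); rewrite inE ltnn.
  have W0 : 0 <= wsum st.2 (nbhd e i :&: st.1).
    by apply: sumr_ge0 => x _; apply: phase1_wge0; lra.
  have BS : Bprime e i :&: st.1 = nbhd e i :&: st.1.
    apply/setP => j; rewrite /Bprime !inE.
    case Hj: (j \in st.1); last by rewrite !andbF.
    have := subsetP Ssub _ Hj; rewrite inE => jl.
    have -> : (j == i) = false by apply/negbTE/eqP => E; move: jl; rewrite E ltnn.
    by rewrite jl !andbT.
  rewrite /pd_step andbF andbT /=.
  set m := marg f st.1 i.
  set W := wsum st.2 (nbhd e i :&: st.1).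
  rewrite (negbTE iS) BS -/W /=.
  case: ifP => cond /=.
  - rewrite setU11 /=.
    have BS2 : Bprime e i :&: (i |: st.1) = i |: (nbhd e i :&: st.1).
      apply/setP => j; rewrite /Bprime !inE.
      case: (eqVneq j i) => [->|ji] //=.
      case Hj: (j \in st.1); last by rewrite !andbF.
      have := subsetP Ssub _ Hj; rewrite inE => jl.
      by rewrite jl !andbT.
    rewrite BS2 /wsum big_setU1 /=; last by rewrite inE (negbTE iS) andbF.
    rewrite ffunE eqxx.
    have -> : \sum_(j in nbhd e i :&: st.1)
                [ffun j0 => if j0 == i then m - W else st.2 j0] j = W.
      apply: eq_bigr => j; rewrite !inE => /andP[_ Hj].
      rewrite ffunE; have := subsetP Ssub _ Hj; rewrite inE => jl.
      by have -> : (j == i) = false by apply/negbTE/eqP => E; move: jl; rewrite E ltnn.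
    have m0 : 0 <= m.
      have : 0 <= (1 + beta) * W by apply: mulr_ge0 => //; lra.
      move=> h; apply: le_trans h _; exact: ltW.
    rewrite subrK !mulr0 !mulr1 addr0.
    have h1 : (1 - p) / p * (p * Q * m) = (1 - p) * Q * m.
      by field; rewrite gt_eqF.
    have h2 : (1 - p) / p * (p * Q * m) <= M * (p * Q * m).
      by apply: ler_wpM2r => //; apply: mulr_ge0 => //; apply: mulr_ge0 => //; lra.
    have h3 : 0 <= M * ((1 - p) * Q * W).
      by apply: mulr_ge0 => //; apply: mulr_ge0 => //; apply: mulr_ge0 => //; lra.
    rewrite mulrDr -!mulrA in h1 h2 h3 *.
    lra.
  - rewrite (negbTE iS) BS /= !mulr1.
    have hm : m <= M * W.
      have : (1 + beta) * W <= M * W by apply: ler_wpM2r.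
      move: cond => /negbT; rewrite -leNgt => h1 h2; exact: le_trans h1 h2.
    rewrite -/W [M * _]mulrDr.
    apply: lerD; rewrite mulrCA; apply: ler_wpM2l => //;
      apply: mulr_ge0 => //; lra.
have pair : forall c : coins n,
  coin_prob p c * X c + coin_prob p (flip c) * X (flip c) <=
  M * (coin_prob p c * Y c + coin_prob p (flip c) * Y (flip c)).
  move=> c; case ci: (c i); last exact: key.
  have := key (flip c); rewrite flipK ffunE eqxx ci => /(_ erefl).
  by rewrite addrC (addrC (_ * Y _)).
have sumflip : forall g : coins n -> R, \sum_c g (flip c) = \sum_c g c.
  by move=> g; rewrite [RHS](reindex_inj flip_inj).
have h : \sum_c (coin_prob p c * X c + coin_prob p (flip c) * X (flip c)) <=
         \sum_c M * (coin_prob p c * Y c + coin_prob p (flip c) * Y (flip c)).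
  by apply: ler_sum => c _; exact: pair.
rewrite -mulr_sumr !big_split /= (sumflip (fun c => coin_prob p c * X c))
  (sumflip (fun c => coin_prob p c * Y c)) in h.
move: h; rewrite /expect -!mulr2n mulrnAr => h.
by rewrite -(ler_pMn2r (ltn0Sn 1)).
Qed.
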